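(* Let $m\geq 4$ be an integer and let $G$ be an $m$-free digraph with at least one vertex. Define, for $v\in V(G)$ and $1\leq k\leq m-3$, $\alpha_k(v)=p_k(v)/s_k(v)$ and $\beta_k(v)=r'_k(v)/t_k(v)$ (with the conventions $a/0=+\infty$ for $a>0$ and $0/0=0$), and let $\alpha=\min_{v\in V(G),\,1\leq k\leq m-3}\alpha_k(v)$ and $\beta=\min_{v\in V(G),\,1\leq k\leq m-3}\beta_k(v)$. Then $\min\{\alpha,\beta\}\leq \frac{1}{m-2}$.
   Context: All digraphs are finite, without loops and without parallel edges. A digraph is $m$-free if it has no directed cycle of length at most $m$. For a vertex $v$ and $i\geq 0$, $N_i^+(v)$ is the set of vertices $u$ such that the shortest directed path from $v$ to $u$ has length exactly $i$. A directed path $(v_0,\dots,v_k)$ consists of distinct vertices with $(v_i,v_{i+1})$ an edge for each $i$; its length is $k$. It is induced if every edge of $G$ with both ends in $\{v_0,\dots,v_k\}$ is one of the edges $(v_i,v_{i+1})$; it is a shortest induced directed path if it is induced and $v_k\in N_k^+(v_0)$. Let $\mathscr{P}(G)$ be the set of shortest induced directed paths of $G$. For an integer $k\geq1$ and $v\in V(G)$: $P_k(v)$ (resp. $Q_k(v)$, $R_k(v)$) is the set of triples $(x,y,z)$ of vertices for which there exist vertices $w_1,\dots,w_k$ with $(x,w_1,\dots,w_k,y,z)\in\mathscr{P}(G)$ and $x=v$ (resp. $y=v$, $z=v$). $P'_k(v)$ (resp. $Q'_k(v)$, $R'_k(v)$) is the set of triples $(x,y,z)$ for which there exist $w_1,\dots,w_k$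 with $(x,y,w_1,\dots,w_k,z)\in\mathscr{P}(G)$ and $x=v$ (resp. $y=v$, $z=v$). Lowercase letters denote cardinalities: $p_k(v)=|P_k(v)|$, etc. For $1\leq k\leq m-3$: $s_k(v)=\sum_{i=k}^{m-3}p'_i(v)+\sum_{i=1}^{k}q'_i(v)$ and $t_k(v)=\sum_{i=k}^{m-3}r_i(v)+\sum_{i=1}^{k}q_i(v)$. *)

(* Defs.v *)
From HB Require Import structures.
From mathcomp Require Import all_boot all_order all_algebra.
Set Implicit Arguments. Unset Strict Implicit. Unset Printing Implicit Defensive.
Import Order.TTheory GRing.Theory Num.Theory.

(* A digraph is a finite type V with an edge relation E : rel V
   (no parallel edges by construction; loops excluded by hypothesis
   in the theorem). *)

Section Digraph.
Variables (V : finType) (E : rel V).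

(* m-free: no directed cycle of length at most m.  A directed cycle of
   length k is a duplicate-free sequence [x_0; ...; x_{k-1}] with edges
   x_i -> x_{i+1} and x_{k-1} -> x_0 (MathComp's [cycle]). *)
Definition mfree (m : nat) : Prop :=
  forall c : seq V, uniq c -> 0 < size c <= m -> ~~ cycle E c.

Fixpoint ball (v : V) (i : nat) : {set V} :=
  match i with
  | 0 => [set v]
  | i'.+1 => ball v i' :|: [set u | [exists w in ball v i', E w u]]
  end.

(* u \in N_i^+(v): the shortest directed path from v to u has length i. *)
Definition inN (v : V) (i : nat) (u : V) : bool :=
  match i with
  | 0 => u == v
  | i'.+1 => (u \in ball v i) && (u \notin ball v i')
  end.

(* s = (v_0, ..., v_k) is a shortest induced directed path. *)
Definition sip (s : seq V) : bool :=
  match s with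
  | [::] => false
  | x :: t =>
      [&& uniq s, path E x t,
          [forall i : 'I_(size s), forall j : 'I_(size s),
             E (nth x s i) (nth x s j) ==> (j == i.+1 :> nat)]
        & inN x (size t) (last x t)]
  end.

Definition triple := (V * V * V)%type.

Definition sipA (k : nat) (t : triple) : bool :=
  let: (x, y, z) := t in [exists w : k.-tuple V, sip (x :: w ++ [:: y; z])].
Definition sipB (k : nat) (t : triple) : bool :=
  let: (x, y, z) := t in [exists w : k.-tuple V, sip (x :: y :: w ++ [:: z])].

Definition P_ k v : {set triple} := [set t | (t.1.1 == v) && sipA k t].
Definition Q_ k v : {set triple} := [set t | (t.1.2 == v) && sipA k t].
Definition R_ k v : {set triple} := [set t | (t.2 == v) && sipA k t].
Definition P'_ k v : {set triple} := [set t | (t.1.1 == v) && sipB k t].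
Definition Q'_ k v : {set triple} := [set t | (t.1.2 == v) && sipB k t].
Definition R'_ k v : {set triple} := [set t | (t.2 == v) && sipB k t].

Definition p k v := #|P_ k v|.
Definition q k v := #|Q_ k v|.
Definition r k v := #|R_ k v|.
Definition p' k v := #|P'_ k v|.
Definition q' k v := #|Q'_ k v|.
Definition r' k v := #|R'_ k v|.

Definition s_ (m k : nat) (v : V) : nat :=
  (\sum_(k <= i < m - 2) p' i v + \sum_(1 <= i < k.+1) q' i v)%N.
Definition t_ (m k : nat) (v : V) : nat :=
  (\sum_(k <= i < m - 2) r i v + \sum_(1 <= i < k.+1) q i v)%N.

End Digraph.

(* Extended nonnegative rationals: Some x = x, None = +infinity. *)
Definition xrat := option rat.

Definition xdiv (a b : nat) : xrat :=
  if b == 0%N then (if a == 0%N then Some 0%R else None)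
  else Some (a%:R / b%:R)%R.

Definition xmin (x y : xrat) : xrat :=
  match x, y with
  | None, _ => y
  | _, None => x
  | Some a, Some b => Some (Num.min a b)
  end.

Definition xle (x y : xrat) : bool :=
  match x, y with
  | _, None => true
  | None, Some _ => false
  | Some a, Some b => (a <= b)%R
  end.

Definition alpha_ (V : finType) (E : rel V) m k v : xrat := xdiv (p E k v) (s_ E m k v).
Definition beta_ (V : finType) (E : rel V) m k v : xrat := xdiv (r' E k v) (t_ E m k v).

Definition alpha (V : finType) (E : rel V) m : xrat :=
  \big[xmin/None]_(v : V) \big[xmin/None]_(1 <= k < m - 2) alpha_ E m k v.
Definition beta (V : finType) (E : rel V) m : xrat :=
  \big[xmin/None]_(v : V) \big[xmin/None]_(1 <= k < m - 2) beta_ E m k v.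

(* Main.v *)
Require Import Defs.
From HB Require Import structures.
From mathcomp Require Import all_boot all_order all_algebra.
From mathcomp Require Import zify.
Import Order.TTheory GRing.Theory Num.Theory.

Lemma xle_minl (a b : xrat) (c : rat) : xle a (Some c) -> xle (xmin a b) (Some c).
Proof.
case: a => [x|] //= Hx; case: b => [y|] //=.
by rewrite ge_min Hx.
Qed.

Lemma xle_minr (a b : xrat) (c : rat) : xle b (Some c) -> xle (xmin a b) (Some c).
Proof.
case: b => [y|] //= Hy; case: a => [x|] //=.
by rewrite ge_min Hy orbT.
Qed.

Lemma xle_big (I : eqType) (r : seq I) (F : I -> xrat) (x : I) (c : rat) :
  x \in r -> xle (F x) (Some c) -> xle (\big[xmin/None]_(i <- r) F i) (Some c).
Proof.
elim: r => [|a r IH] //= Hin HF.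
rewrite big_cons.
move: Hin; rewrite in_cons => /orP [/eqP <-|Hin].
  exact: xle_minl.
apply: xle_minr; exact: IH.
Qed.

Lemma xdiv_le (N a b : nat) : 0 < N -> ~~ (b < N * a) ->
  xle (xdiv a b) (Some (1 / N%:R)%R).
Proof.
move=> HN Hab; rewrite /xdiv.
case: eqP => [Hb|/eqP Hb].
  case: eqP => [Ha|/eqP Ha] /=.
    by rewrite divr_ge0 // ler0n.
  by exfalso; move: Hab; rewrite Hb; apply/negP/negPn; lia.
rewrite /= ler_pdivrMr ?ltr0n ?lt0n //.
rewrite mul1r mulrC ler_pdivlMr ?ltr0n //.
rewrite -natrM ler_nat; lia.
Qed.

Lemma sum_part (V : finType) (T : finType) (f : T -> V) (P : pred T) :
  (\sum_(v : V) #|[set t | (f t == v) && P t]| = #|[set t | P t]|)%N.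
Proof.
rewrite -sum1_card (partition_big f predT) //=.
apply: eq_bigr => v _; rewrite -sum1_card.
by apply: eq_bigl => t; rewrite !inE andbC.
Qed.

Lemma sum_lt_nat (a b : nat) (F G : nat -> nat) : a < b ->
  (forall i, a <= i < b -> F i < G i) ->
  (\sum_(a <= i < b) F i < \sum_(a <= i < b) G i)%N.
Proof.
move=> Hab H; rewrite !(big_ltn Hab).
have H1 := H a; have : (\sum_(a.+1 <= i < b) F i <= \sum_(a.+1 <= i < b) G i)%N.
  rewrite big_nat_cond [X in (_ <= X)%N]big_nat_cond.
  apply: leq_sum => i /andP [/andP [H2 H3] _]; apply: ltnW; apply: H; lia.
have := H1 (ltac:(lia)); lia.
Qed.

Lemma sum_lt_fin (V : finType) (F G : V -> nat) : 0 < #|V| ->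
  (forall v, F v < G v) -> (\sum_(v : V) F v < \sum_(v : V) G v)%N.
Proof.
move=> HV H; case/card_gt0P: HV => v0 _.
rewrite (bigD1 v0) // [X in (_ < X)%N](bigD1 v0) //=.
have : (\sum_(v | v != v0) F v <= \sum_(v | v != v0) G v)%N.
  by apply: leq_sum => i _; apply: ltnW.
have := H v0; lia.
Qed.

Section Main.
Variables (V : finType) (E : rel V).

Definition TA i := #|[set t | sipA E i t]|.
Definition TB i := #|[set t | sipB E i t]|.

Lemma sum_p k : (\sum_v p E k v = TA k)%N.
Proof. rewrite /TA /TB /p /q /r /p' /q' /r' /P_ /Q_ /R_ /P'_ /Q'_ /R'_; exact: (@sum_part V (triple V) (fun t => t.1.1) _). Qed.
Lemma sum_q k : (\sum_v q E k v = TA k)%N.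
Proof. rewrite /TA /TB /p /q /r /p' /q' /r' /P_ /Q_ /R_ /P'_ /Q'_ /R'_; exact: (@sum_part V (triple V) (fun t => t.1.2) _). Qed.
Lemma sum_r k : (\sum_v r E k v = TA k)%N.
Proof. rewrite /TA /TB /p /q /r /p' /q' /r' /P_ /Q_ /R_ /P'_ /Q'_ /R'_; exact: (@sum_part V (triple V) (fun t => t.2) _). Qed.
Lemma sum_p' k : (\sum_v p' E k v = TB k)%N.
Proof. rewrite /TA /TB /p /q /r /p' /q' /r' /P_ /Q_ /R_ /P'_ /Q'_ /R'_; exact: (@sum_part V (triple V) (fun t => t.1.1) _). Qed.
Lemma sum_q' k : (\sum_v q' E k v = TB k)%N.
Proof. rewrite /TA /TB /p /q /r /p' /q' /r' /P_ /Q_ /R_ /P'_ /Q'_ /R'_; exact: (@sum_part V (triple V) (fun t => t.1.2) _). Qed.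
Lemma sum_r' k : (\sum_v r' E k v = TB k)%N.
Proof. rewrite /TA /TB /p /q /r /p' /q' /r' /P_ /Q_ /R_ /P'_ /Q'_ /R'_; exact: (@sum_part V (triple V) (fun t => t.2) _). Qed.

Lemma sum_s m k : (\sum_v s_ E m k v =
   \sum_(k <= i < m - 2) TB i + \sum_(1 <= i < k.+1) TB i)%N.
Proof.
rewrite /s_ big_split /=; congr (_ + _)%N.
  by rewrite exchange_big; apply: eq_bigr => i _; rewrite sum_p'.
by rewrite exchange_big; apply: eq_bigr => i _; rewrite sum_q'.
Qed.

Lemma sum_t m k : (\sum_v t_ E m k v =
   \sum_(k <= i < m - 2) TA i + \sum_(1 <= i < k.+1) TA i)%N.
Proof.
rewrite /t_ big_split /=; congr (_ + _)%N.
  by rewrite exchange_big; apply: eq_bigr => i _; rewrite sum_r.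
by rewrite exchange_big; apply: eq_bigr => i _; rewrite sum_q.
Qed.

Lemma split_sum (T : nat -> nat) N k : 1 <= k < N ->
  (\sum_(k <= i < N) T i + \sum_(1 <= i < k.+1) T i =
   \sum_(1 <= i < N) T i + T k)%N.
Proof.
move=> /andP [H1 H2].
rewrite (big_nat_recr k 1) // (@big_cat_nat _ _ _ k 1 N) //=; lia.
Qed.

Lemma key (m : nat) : 4 <= m -> 0 < #|V| ->
  (forall v k, 1 <= k < m - 2 ->
     s_ E m k v < (m - 2) * p E k v /\ t_ E m k v < (m - 2) * r' E k v) ->
  False.
Proof.
move=> Hm HV H.
set N := m - 2.
have HA : forall k, 1 <= k < N ->
   (\sum_(1 <= i < N) TB i + TB k < N * TA k)%N.
  move=> k Hk; rewrite -split_sum // -sum_s -sum_p big_distrr /=.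
  by apply: sum_lt_fin => // v; case: (H v k Hk).
have HB : forall k, 1 <= k < N ->
   (\sum_(1 <= i < N) TA i + TA k < N * TB k)%N.
  move=> k Hk; rewrite -split_sum // -sum_t -sum_r' big_distrr /=.
  by apply: sum_lt_fin => // v; case: (H v k Hk).
have HN : 1 < N by rewrite /N; lia.
have SA := @sum_lt_nat _ _ _ _ HN HA.
have SB := @sum_lt_nat _ _ _ _ HN HB.
rewrite -!big_distrr /= !big_split /= !sum_nat_const_nat in SA SB.
lia.
Qed.

End Main.

Theorem lemma2p5 (V : finType) (E : rel V) (m : nat)
  (Hm : 4 <= m) (Hloop : forall x : V, ~~ E x x) (Hfree : mfree E m)
  (HV : 0 < #|V|) :
  xle (xmin (alpha E m) (beta E m)) (Some (1 / (m - 2)%:R)%R).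
Proof.
apply/negPn/negP => Hb.
apply: (@key V E m Hm HV) => v k Hk.
have HN : 0 < m - 2 by lia.
split.
  case: (ltnP (s_ E m k v) ((m - 2) * p E k v)) => // Hle.
  exfalso; move/negP: Hb; apply; apply: xle_minl.
  apply: (@xle_big _ _ _ v); first by rewrite mem_index_enum.
  apply: (@xle_big _ _ _ k); first by rewrite mem_index_iota.
  by apply: xdiv_le => //; rewrite -leqNgt.
case: (ltnP (t_ E m k v) ((m - 2) * r' E k v)) => // Hle.
exfalso; move/negP: Hb; apply; apply: xle_minr.
apply: (@xle_big _ _ _ v); first by rewrite mem_index_enum.
apply: (@xle_big _ _ _ k); first by rewrite mem_index_iota.
by apply: xdiv_le => //; rewrite -leqNgt.
Qed.
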